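(* Let $\Omega_1,\dots,\Omega_k$ be pairwise disjoint non-empty subsets of $\{1,\dots,n\}$, let $G_i\leq\mathrm{Sym}(\Omega_i)$, and let $G=G_1\cdot G_2\cdots G_k$ be their internal direct product, acting on $\Omega=\Omega_1\cup\cdots\cup\Omega_k$ by $x^{g_1\cdots g_k}=x^{g_i}$ for $x\in\Omega_i$. If every $G_i$ (with its action on $\Omega_i$) has the EKR property, then $G$ (with its action on $\Omega$) has the EKR property.
   Context: The internal direct product consists of the products $g_1g_2\cdots g_k$ with $g_i\in G_i$, with multiplication $(g_1\cdots g_k)(h_1\cdots h_k)=(g_1h_1)\cdots(g_kh_k)$. For a permutation group acting on a finite set: two elements $\pi,\tau$ intersect if $\pi\tau^{-1}$ has a fixed point. A subset is intersecting if every pair of its elements intersect. A group has the EKR property if every intersecting subset has size at most the size of the largest point-stabilizer. *)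

(* Defs.v *)
From mathcomp Require Import all_boot all_fingroup.
Set Implicit Arguments. Unset Strict Implicit. Unset Printing Implicit Defensive.
Local Open Scope group_scope.

Definition perm_intersect (T : finType) (Om : {set T}) (p q : {perm T}) : bool :=
  [exists x in Om, (p * q^-1) x == x].

Definition intersecting (T : finType) (Om : {set T}) (S : {set {perm T}}) : Prop :=
  forall p q, p \in S -> q \in S -> perm_intersect Om p q.

Definition max_stab (T : finType) (Om : {set T}) (G : {set {perm T}}) : nat :=
  \max_(x in Om) #|'C_G[x | 'P]|.

Definition EKR (T : finType) (Om : {set T}) (G : {set {perm T}}) : Prop :=
  forall S : {set {perm T}}, S \subset G -> intersecting Om S -> #|S| <= max_stab Om G.

(* Main.v *)
Require Import Defs.
From mathcomp Require Import all_boot all_fingroup.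
From mathcomp Require Import zify.
Set Implicit Arguments. Unset Strict Implicit. Unset Printing Implicit Defensive.


Lemma card_slice2 (A B : finType) (Z : {set A * B}) :
  #|Z| = \sum_(b : B) #|[set a | (a, b) \in Z]|.
Proof.
rewrite -sum1_card big_mkcond /=.
transitivity (\sum_(b : B) \sum_(a : A) (if (a, b) \in Z then 1 else 0)).
  by rewrite exchange_big pair_big /=; apply: eq_bigr => -[a b].
apply: eq_bigr => b _.
by rewrite -sum1_card [RHS]big_mkcond /=; apply: eq_bigr => a _; rewrite inE.
Qed.

Lemma card_slice1 (A B : finType) (Z : {set A * B}) :
  #|Z| = \sum_(a : A) #|[set b | (a, b) \in Z]|.
Proof.
rewrite -sum1_card big_mkcond /=.
transitivity (\sum_(a : A) \sum_(b : B) (if (a, b) \in Z then 1 else 0)).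
  by rewrite pair_big /=; apply: eq_bigr => -[a b].
apply: eq_bigr => a _.
by rewrite -sum1_card [RHS]big_mkcond /=; apply: eq_bigr => b _; rewrite inE.
Qed.


Definition nb (T : finType) (V : {set T}) (e : rel T) (J : {set T}) : {set T} :=
  [set a' in V | (a' \in J) || [exists a in J, e a a']].

Lemma arith_fin (s1 s2 t1 t2 a b m1 m2 M : nat) :
  s1 * a <= m1 * t1 -> s2 * b <= m2 * t2 -> t1 + t2 <= a * b ->
  m1 * b <= M -> m2 * a <= M -> (s1 + s2) * (a * b) <= M * (a * b).
Proof.
move=> h1 h2 h3 h4 h5.
have e1 : s1 * a * b <= m1 * t1 * b by rewrite leq_mul2r h1 orbT.
have e2 : s2 * b * a <= m2 * t2 * a by rewrite leq_mul2r h2 orbT.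
have e3 : m1 * b * t1 <= M * t1 by rewrite leq_mul2r h4 orbT.
have e4 : m2 * a * t2 <= M * t2 by rewrite leq_mul2r h5 orbT.
have e5 : M * (t1 + t2) <= M * (a * b) by rewrite leq_mul2l h3 orbT.
nia.
Qed.

Lemma core (A B : finType) (VA : {set A}) (VB : {set B}) (e1 : rel A) (e2 : rel B)
  (m1 m2 : nat) (sym1 : symmetric e1) (sym2 : symmetric e2)
  (L1 : forall J : {set A}, J \subset VA ->
     (forall a a', a \in J -> a' \in J -> ~~ e1 a a') -> #|J| * #|VA| <= m1 * #|nb VA e1 J|)
  (L2 : forall J : {set B}, J \subset VB ->
     (forall b b', b \in J -> b' \in J -> ~~ e2 b b') -> #|J| * #|VB| <= m2 * #|nb VB e2 J|)
  (I : {set A * B}) (sub : I \subset setX VA VB)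
  (ind : forall z z', z \in I -> z' \in I -> ~~ (e1 z.1 z'.1 && e2 z.2 z'.2)) :
  #|I| * (#|VA| * #|VB|) <= maxn (m1 * #|VB|) (m2 * #|VA|) * (#|VA| * #|VB|).
Proof.
pose D b := [set a | (a, b) \in I].
pose Iso b := [set a in D b | ~~ [exists a'' in D b, e1 a a'']].
pose RP := [set z in I | z.1 \in Iso z.2].
pose Rp := I :\: RP.
pose Rc a := [set b | (a, b) \in Rp].
have RPE a b : ((a, b) \in RP) = ((a, b) \in I) && (a \in Iso b) by rewrite inE.
have subI z : z \in I -> (z.1 \in VA) && (z.2 \in VB).
  by move=> zI; have := subsetP sub z zI; rewrite inE.
have inD a b : (a \in D b) = ((a, b) \in I) by rewrite inE.
have isoD a b : a \in Iso b -> (a, b) \in I by rewrite inE inD => /andP[].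
have RpE a b : ((a, b) \in Rp) = ((a, b) \in I) && (a \notin Iso b).
  by rewrite !inE /= andbC; case: ((a, b) \in I).
have colIso a b b'' : (a, b) \in Rp -> (a, b'') \in I -> ~~ e2 b b''.
  rewrite RpE => /andP[abI]; rewrite inE inD abI /= negbK => /existsP[a'' /andP[]].
  rewrite inD => a''I ea ab''I.
  by have := ind _ _ a''I ab''I; rewrite /= sym1 ea.
have isoInd b a a' : a \in Iso b -> a' \in Iso b -> ~~ e1 a a'.
  rewrite inE => /andP[_ /existsPn H] a'iso.
  by have := H a'; rewrite inD (isoD _ _ a'iso).
have isoSub b : Iso b \subset VA.
  by apply/subsetP => a /isoD /subI /andP[].
have nbE (T : finType) (V : {set T}) (e : rel T) (J : {set T}) x :
  (x \in nb V e J) = (x \in V) && ((x \in J) || [exists a in J, e a x]) by rewrite inE.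
have RcE a b : (b \in Rc a) = ((a, b) \in Rp) by rewrite inE.
have RcInd a b b' : b \in Rc a -> b' \in Rc a -> ~~ e2 b b'.
  rewrite !RcE => bR b'R; apply: colIso bR _.
  by move: b'R; rewrite RpE => /andP[].
have RcSub a : Rc a \subset VB.
  by apply/subsetP => b; rewrite RcE RpE => /andP[/subI /andP[]].
have E1 : #|RP| = \sum_b #|Iso b|.
  rewrite card_slice2; apply: eq_bigr => b _; apply: eq_card => a.
  rewrite inE RPE; apply/andP/idP => [[] //|aiso]; split=> //.
  exact: isoD.
have E2 : #|Rp| = \sum_a #|Rc a| by rewrite card_slice1.
have sRP : RP \subset I by apply/subsetP => z; rewrite inE => /andP[].
have E3 : #|I| = #|RP| + #|Rp| by rewrite -(cardsID RP I) (setIidPr sRP).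
pose Trow := [set z : A * B | z.1 \in nb VA e1 (Iso z.2)].
pose Tcol := [set z : A * B | z.2 \in nb VB e2 (Rc z.1)].
have E4 : #|Trow| = \sum_b #|nb VA e1 (Iso b)|.
  by rewrite card_slice2; apply: eq_bigr => b _; apply: eq_card => a; rewrite !inE.
have E5 : #|Tcol| = \sum_a #|nb VB e2 (Rc a)|.
  by rewrite card_slice1; apply: eq_bigr => a _; apply: eq_card => b; rewrite !inE.
have E6 : #|Trow| + #|Tcol| <= #|VA| * #|VB|.
  have dis : Trow :&: Tcol = set0.
    apply/setP => -[a' b]; rewrite inE [_ \in set0]inE.
    rewrite [_ \in Trow]inE [_ \in Tcol]inE !nbE /=.
    apply/negbTE; apply/negP => /andP[/andP[_ H1] /andP[_ H2]].
    case/orP: H1 => [a'iso | /existsP[a /andP[aiso ea]]];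
      case/orP: H2 => [bR | /existsP[b' /andP[b'R eb]]].
    - by move: bR; rewrite RcE RpE a'iso andbF.
    - by rewrite RcE in b'R; have := colIso _ _ _ b'R (isoD _ _ a'iso); rewrite eb.
    - move: aiso; rewrite inE => /andP[_ /existsPn H].
      have := H a'; rewrite inD ea andbT; move: bR; rewrite RcE RpE => /andP[-> _].
      by [].
    - rewrite RcE in b'R.
      have a'b'I : (a', b') \in I by move: b'R; rewrite RpE => /andP[].
      by have := ind _ _ (isoD _ _ aiso) a'b'I; rewrite /= ea sym2 eb.
  have := cardsU Trow Tcol; rewrite dis cards0 subn0 => <-.
  rewrite -cardsX; apply: subset_leq_card; apply/subsetP => -[a b].
  rewrite in_setU [_ \in Trow]inE [_ \in Tcol]inE !nbE in_setX /=.
  case/orP => /andP[-> H] /=.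
    have [a0 a0I] : exists a0, a0 \in Iso b.
      by case/orP: H => [|/existsP[a0 /andP[]]]; [exists a | exists a0].
    by have := subI _ (isoD _ _ a0I); case/andP.
  rewrite andbT.
  have [b0 b0R] : exists b0, b0 \in Rc a.
    by case/orP: H => [|/existsP[b0 /andP[]]]; [exists b | exists b0].
  by move: b0R; rewrite RcE RpE => /andP[/subI /andP[]].
have I1 : (\sum_b #|Iso b|) * #|VA| <= m1 * \sum_b #|nb VA e1 (Iso b)|.
  rewrite big_distrl big_distrr /=; apply: leq_sum => b _.
  exact: L1 (isoSub b) (isoInd b).
have I2 : (\sum_a #|Rc a|) * #|VB| <= m2 * \sum_a #|nb VB e2 (Rc a)|.
  rewrite big_distrl big_distrr /=; apply: leq_sum => a _.
  exact: L2 (RcSub a) (RcInd a).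
rewrite E3 E1 E2; apply: arith_fin I1 I2 _ (leq_maxl _ _) (leq_maxr _ _).
by rewrite -E4 -E5.
Qed.

Local Open Scope group_scope.

Lemma pi_sym (T : finType) (Om : {set T}) (p q : {perm T}) :
  perm_intersect Om p q = perm_intersect Om q p.
Proof.
wlog suff : p q / perm_intersect Om p q -> perm_intersect Om q p.
  by move=> H; apply/idP/idP; apply: H.
case/existsP => x /andP[xOm /eqP fx]; apply/existsP; exists x; rewrite xOm /=.
have -> : q * p^-1 = (p * q^-1)^-1 by rewrite invMg invgK.
by rewrite -{1}fx permK.
Qed.

Lemma card_setI_sum (T : finType) (A B : {set T}) :
  #|A :&: B| = \sum_(x in B) (x \in A).
Proof.
rewrite -sum1_card big_mkcond [RHS]big_mkcond /=; apply: eq_bigr => x _.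
by rewrite inE; case: (x \in A); case: (x \in B).
Qed.

Definition erel (T : finType) (Om : {set T}) : rel {perm T} :=
  [rel p q | ~~ perm_intersect Om p q].

Lemma expansion (T : finType) (Om : {set T}) (H : {group {perm T}}) :
  Om != set0 -> EKR Om H ->
  forall J : {set {perm T}}, J \subset H ->
  (forall a a', a \in J -> a' \in J -> ~~ erel Om a a') ->
  (#|J| * #|H| <= max_stab Om H * #|nb H (erel Om) J|)%N.
Proof.
move=> Om0 ekr J sJ indJ.
have Om_gt0 : 0 < #|Om| by rewrite card_gt0.
have [x0 x0Om mE] := eq_bigmax_cond (fun x => #|'C_H[x | 'P]|) Om_gt0.
rewrite /max_stab mE.
set St := 'C_H[x0 | 'P]%G.
have StH : St \subset H by apply: subsetIl.
have Stfix u : u \in St -> u x0 = x0.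
  by rewrite inE => /andP[_ /astab1P].
set N := nb H (erel Om) J.
have nbE x : (x \in N) = (x \in H) && ((x \in J) || [exists a in J, erel Om a x]).
  by rewrite inE.
pose C := H :\: N.
have JN : J \subset N by apply/subsetP => x xJ; rewrite nbE xJ (subsetP sJ).
have NH : N \subset H by apply/subsetP => x; rewrite nbE => /andP[].
have key g : g \in H -> #|St :* g :&: C| + #|J| <= #|St|.
  move=> gH.
  have dis : (St :* g :&: C) :&: J = set0.
    apply/setP => x; rewrite !in_setI in_setD in_set0; apply/negbTE; apply/negP.
    case/andP => /andP[_ /andP[/negP xN _]] xJ; apply: xN.
    by rewrite nbE xJ (subsetP sJ).
  have := ekr ((St :* g :&: C) :|: J) _ _.
  rewrite /max_stab mE cardsU dis cards0 subn0; apply.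
    rewrite subUset sJ andbT; apply/subsetP => x; rewrite !inE => /and3P[_ _ ->] //.
  move=> p q; rewrite !inE => /orP[/andP[pSt pC]|pJ] /orP[/andP[qSt qC]|qJ].
  - apply/existsP; exists x0; rewrite x0Om /=; apply/eqP; apply: Stfix.
    rewrite mem_rcoset in pSt; rewrite mem_rcoset in qSt.
    have -> : p * q^-1 = (p * g^-1) * (q * g^-1)^-1.
      by rewrite invMg invgK mulgA mulgKV.
    by rewrite groupM // groupV.
  - move: pC => /andP[/negP pN pH].
    rewrite pi_sym; case: (boolP (perm_intersect Om q p)) => // npi; exfalso; apply: pN.
    rewrite pH; apply/orP; right; apply/existsP; exists q; rewrite qJ /=.
    exact: npi.
  - move: qC => /andP[/negP qN qH].
    case: (boolP (perm_intersect Om p q)) => // npi; exfalso; apply: qN.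
    rewrite qH; apply/orP; right; apply/existsP; exists p; rewrite pJ /=.
    exact: npi.
  - by have := indJ _ _ pJ qJ; rewrite /= negbK.
have sum : \sum_(g in H) #|St :* g :&: C| = (#|C| * #|St|)%N.
  transitivity (\sum_(g in H) \sum_(c in C) (c \in St :* g)).
    by apply: eq_bigr => g _; rewrite card_setI_sum.
  rewrite exchange_big /= -sum_nat_const; apply: eq_bigr => c cC.
  have cH : c \in H by move: cC; rewrite inE => /andP[].
  transitivity (\sum_(g in H) (g \in [set g | c \in St :* g])).
    by apply: eq_bigr => g _; rewrite inE.
  rewrite -(card_rcoset St c) -(card_setI_sum [set g | c \in St :* g]).
  apply: eq_card => g; rewrite !inE !mem_rcoset.
  apply/andP/idP => [[cg gH]|gc].
    by rewrite -groupV invMg invgK.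
  split; first by rewrite -groupV invMg invgK.
  by rewrite -(mulgKV c g) groupM // (subsetP StH).
have tot : (#|C| * #|St| + #|H| * #|J| <= #|H| * #|St|)%N.
  rewrite -sum -!sum_nat_const -big_split /=; apply: leq_sum => g gH.
  exact: key.
have CE : #|C| = #|H| - #|N| by rewrite cardsD (setIidPr NH).
have NleH : #|N| <= #|H| by apply: subset_leq_card.
rewrite CE mulnBl in tot.
have NS : (#|N| * #|St| <= #|H| * #|St|)%N by rewrite leq_mul2r NleH orbT.
rewrite mulnC [(#|St| * _)%N]mulnC.
move: tot NS; set a := (#|H| * #|St|)%N; set b := (#|N| * #|St|)%N;
  set c := (#|H| * #|J|)%N; lia.
Qed.

Lemma fix_mul (T : finType) (O1 O2 : {set T}) (u v : {perm T}) (x : T) :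
  [disjoint O1 & O2] -> perm_on O1 u -> perm_on O2 v ->
  (u * v) x = if x \in O1 then u x else v x.
Proof.
move=> dis pu pv; rewrite permM; case: ifP => xO1.
  apply: out_perm pv _; apply/negbT; apply: disjointFr dis _.
  by rewrite (perm_closed _ pu).
by rewrite (out_perm pu) ?xO1.
Qed.

Lemma inter_dec (T : finType) (O1 O2 : {set T}) (h h' k k' : {perm T}) :
  [disjoint O1 & O2] -> perm_on O1 h -> perm_on O1 h' -> perm_on O2 k -> perm_on O2 k' ->
  perm_intersect (O1 :|: O2) (h * k) (h' * k') =
  perm_intersect O1 h h' || perm_intersect O2 k k'.
Proof.
move=> dis ph ph' pk pk'.
have pu : perm_on O1 (h * h'^-1) by apply: perm_onM => //; apply: perm_onV.
have pv : perm_on O2 (k * k'^-1) by apply: perm_onM => //; apply: perm_onV.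
rewrite /perm_intersect.
have -> : (h * k) * (h' * k')^-1 = (h * h'^-1) * (k * k'^-1).
  rewrite invMg -!mulgA; congr (h * _); rewrite mulgA.
  apply: (perm_onC pv (perm_onV ph')); by rewrite disjoint_sym.
apply/existsP/orP => [[x /andP[]]|[]].
- rewrite in_setU (fix_mul _ dis pu pv); case: ifP => xO1 /= xO2 fx.
    by left; apply/existsP; exists x; rewrite xO1.
  by right; apply/existsP; exists x; rewrite xO2.
- case/existsP => x /andP[xO1 fx]; exists x.
  by rewrite in_setU xO1 (fix_mul _ dis pu pv) xO1.
- case/existsP => x /andP[xO2 fx]; exists x.
  by rewrite in_setU xO2 orbT (fix_mul _ dis pu pv) (disjointFl dis xO2).
Qed.

Lemma symP (T : finType) (O : {set T}) (H : {group {perm T}}) h :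
  H \subset Sym O -> h \in H -> perm_on O h.
Proof. by move=> sH hH; have := subsetP sH h hH; rewrite inE. Qed.

Lemma two_factor (T : finType) (O1 O2 : {set T}) (H K : {group {perm T}}) :
  O1 != set0 -> O2 != set0 -> [disjoint O1 & O2] ->
  H \subset Sym O1 -> K \subset Sym O2 -> EKR O1 H -> EKR O2 K ->
  EKR (O1 :|: O2) (H * K).
Proof.
move=> O10 O20 dis sH sK ekrH ekrK S sS intS.
have HK1 : H :&: K = 1.
  apply/trivgP/subsetP => x; rewrite in_setI => /andP[xH xK]; rewrite inE.
  apply/eqP/permP => y; rewrite perm1.
  case: (boolP (y \in O1)) => yO1.
    by apply: out_perm (symP sK xK) _; rewrite (disjointFr dis yO1).
  exact: out_perm (symP sH xH) _.
pose I := [set z : {perm T} * {perm T} | [&& z.1 \in H, z.2 \in K & z.1 * z.2 \in S]].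
have cardI : #|S| = #|I|.
  have -> : S = [set z.1 * z.2 | z in I].
    apply/setP => s; apply/idP/imsetP => [sS'|[z zI ->]].
      have := subsetP sS s sS'; case/mulsgP => h k hH kK e.
      by exists (h, k) => //; rewrite inE /= hH kK -e sS'.
    by move: zI; rewrite inE => /and3P[].
  apply: card_in_imset => -[h k] [h' k']; rewrite !inE /= => /and3P[hH kK _] /and3P[h'H k'K _] e.
  have e2 : h'^-1 * h = k' * k^-1.
    by apply: (mulIg k); rewrite -mulgA e mulKg mulgKV.
  have : h'^-1 * h \in H :&: K.
    by rewrite in_setI groupM ?groupV //= e2 groupM ?groupV.
  rewrite HK1 inE => /eqP e3.
  have hh : h = h' by apply/eqP; rewrite eq_sym -[h']invgK eq_invg_mul e3.
  move: e; rewrite hh => /mulgI ->; done.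
rewrite cardI.
have HKpos : 0 < (#|H| * #|K|)%N by rewrite muln_gt0 !cardG_gt0.
have sym1 : symmetric (erel O1) by move=> p q; rewrite /erel /= pi_sym.
have sym2 : symmetric (erel O2) by move=> p q; rewrite /erel /= pi_sym.
have subI : I \subset setX H K.
  by apply/subsetP => z; rewrite !inE => /and3P[-> -> _].
have indI : forall z z', z \in I -> z' \in I -> ~~ (erel O1 z.1 z'.1 && erel O2 z.2 z'.2).
  move=> z z'; rewrite !inE => /and3P[z1H z2K zS] /and3P[z'1H z'2K z'S].
  rewrite /erel /= negb_and !negbK -(inter_dec dis); first exact: intS.
  - exact: symP sH z1H.
  - exact: symP sH z'1H.
  - exact: symP sK z2K.
  - exact: symP sK z'2K.
have main := core sym1 sym2 (expansion O10 ekrH) (expansion O20 ekrK) subI indI.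
move: main; rewrite leq_pmul2r // => leI; apply: leq_trans leI _.
rewrite geq_max; apply/andP; split.
- have O1gt0 : 0 < #|O1| by rewrite card_gt0.
  have [x0 x0O mE] := eq_bigmax_cond (fun x => #|'C_H[x | 'P]|) O1gt0.
  rewrite /max_stab mE.
  have TI : 'C_H[x0 | 'P] :&: K = 1.
    apply/trivgP; rewrite -HK1; apply: setSI; exact: subsetIl.
  rewrite -(TI_cardMg (G := 'C_H[x0 | 'P]%G) TI).
  apply: leq_trans (leq_bigmax_cond _ (_ : x0 \in O1 :|: O2)); last first.
    by rewrite in_setU x0O.
  apply: subset_leq_card; apply/subsetP => y /mulsgP[s k sC kK ->].
  move: sC; rewrite in_setI => /andP[sH' /astab1P sfix].
  rewrite in_setI mem_mulg //=; apply/astab1P; change ((s * k) x0 = x0); rewrite permM.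
  move: sfix; change (s x0 = x0 -> k (s x0) = x0) => ->.
  by apply: out_perm (symP sK kK) _; rewrite (disjointFr dis x0O).
- have O2gt0 : 0 < #|O2| by rewrite card_gt0.
  have [x0 x0O mE] := eq_bigmax_cond (fun x => #|'C_K[x | 'P]|) O2gt0.
  rewrite /max_stab mE mulnC.
  have TI : H :&: 'C_K[x0 | 'P] = 1.
    apply/trivgP; rewrite -HK1; apply: setIS; exact: subsetIl.
  rewrite -(TI_cardMg (H := 'C_K[x0 | 'P]%G) TI).
  apply: leq_trans (leq_bigmax_cond _ (_ : x0 \in O1 :|: O2)); last first.
    by rewrite in_setU x0O orbT.
  apply: subset_leq_card; apply/subsetP => y /mulsgP[h s hH sC ->].
  move: sC; rewrite in_setI => /andP[sK' /astab1P sfix].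
  rewrite in_setI mem_mulg //=; apply/astab1P; change ((h * s) x0 = x0); rewrite permM.
  move: sfix; change (s x0 = x0 -> s (h x0) = x0); rewrite (out_perm (symP sH hH)) ?(disjointFl dis x0O) //.
Qed.

Lemma perm_onS' (T : finType) (A B : {set T}) (u : {perm T}) :
  perm_on A u -> A \subset B -> perm_on B u.
Proof. by move=> pu AB; apply: subset_trans pu AB. Qed.

Lemma main_ind (n k : nat) : forall (Om : 'I_k -> {set 'I_n})
    (G : 'I_k -> {group {perm 'I_n}}),
  (forall i, Om i != set0) ->
  (forall i j, i != j -> [disjoint Om i & Om j]) ->
  (forall i, G i \subset Sym (Om i)) ->
  (forall i, EKR (Om i) (G i)) ->
  [/\ group_set (\prod_(i < k) (G i : {set {perm 'I_n}})),
      \prod_(i < k) (G i : {set {perm 'I_n}}) \subset Sym (\bigcup_(i < k) Om i) &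
      EKR (\bigcup_(i < k) Om i) (\prod_(i < k) (G i : {set {perm 'I_n}}))].
Proof.
elim: k => [|k IH] Om G Om0 dis sG ekr.
  rewrite !big_ord0; split.
  - exact: group_set_one.
  - by apply/subsetP => x; rewrite inE => /eqP ->; rewrite inE perm_on1.
  - move=> S sS intS.
    suff -> : S = set0 by rewrite cards0.
    apply/setP => p; rewrite in_set0; apply/negbTE/negP => pS.
    by have := intS p p pS pS; case/existsP => x; rewrite inE.
pose w := widen_ord (leqnSn k).
have disw : forall i j, i != j -> [disjoint Om (w i) & Om (w j)].
  move=> i j ij; apply: dis; move: ij; apply: contra => /eqP [] e.
  by apply/eqP/val_inj.
have [gs sP ekrP] := IH (fun i => Om (w i)) (fun i => G (w i))
  (fun i => Om0 _) disw (fun i => sG _) (fun i => ekr _).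
set P := \prod_(i < k) _ in gs sP ekrP.
set U := \bigcup_(i < k) _ in sP ekrP.
rewrite !big_ord_recr /= -/P -/U.
pose Hg := Group gs.
have disU : [disjoint U & Om ord_max].
  rewrite disjoint_sym; apply: bigcup_disjoint => i _; apply: dis.
  by apply/eqP => /(congr1 val) /= e; have := ltn_ord i; rewrite -e ltnn.
have pP h : h \in P -> perm_on U h.
  by move=> hP; have := subsetP sP h hP; rewrite inE.
have pK h : h \in G ord_max -> perm_on (Om ord_max) h.
  by move=> hK; have := subsetP (sG ord_max) h hK; rewrite inE.
split.
- have : group_set (Hg * G ord_max).
    apply/comm_group_setP; apply: centC; apply/subsetP => h hP; apply/centP => x xK.
    exact: perm_onC (pP h hP) (pK x xK) disU.
  by [].
- apply/subsetP => y /mulsgP[h x hP xK ->]; rewrite inE.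
  apply: perm_onM.
    by apply: perm_onS' (pP h hP) _; apply: subsetUl.
  by apply: perm_onS' (pK x xK) _; apply: subsetUr.
- case: (boolP (U == set0)) => [/eqP U0|U0].
    have P1 : P = 1.
      apply/eqP; rewrite eqEsubset; apply/andP; split; last exact: (sub1G Hg).
      apply/subsetP => h hP; rewrite inE; apply/eqP.
      by apply: perm_on_id (pP h hP) _; rewrite U0 cards0.
    rewrite P1 mul1g U0 set0U; exact: ekr.
  have := two_factor U0 (Om0 ord_max) disU (_ : Hg \subset Sym U) (sG _) ekrP (ekr _).
  apply; exact: sP.
Qed.


Unset Implicit Arguments.

Theorem theorem18 (n k : nat) (Om : 'I_k -> {set 'I_n})
    (G : 'I_k -> {group {perm 'I_n}}) :
  (forall i, Om i != set0) ->
  (forall i j, i != j -> [disjoint Om i & Om j]) ->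
  (forall i, G i \subset Sym (Om i)) ->
  (forall i, EKR (Om i) (G i)) ->
  EKR (\bigcup_(i < k) Om i) (\prod_(i < k) (G i : {set {perm 'I_n}})).
Proof. by move=> h1 h2 h3 h4; case: (main_ind h1 h2 h3 h4). Qed.
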